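(* Let $\mathfrak g$ be a finite-dimensional simple complex Lie algebra of classical type, $\mathfrak a\subseteq\mathfrak g$ a semisimple Levi subalgebra and $\lambda\in P^+$. If $(\mathfrak a,\lambda)$ is globally admissible, then $(\mathfrak a,\lambda)$ is locally admissible.
   Context: $\mathfrak g$ is a finite-dimensional simple complex Lie algebra of classical type $A_n,B_n,C_n$ or $D_n$ with Cartan subalgebra $\mathfrak h$, roots $R$, fundamental weights $\omega_1,\dots,\omega_n$, dominant integral weights $P^+$; roots are written in the standard coordinates $\varepsilon_i$ (type $B_n$: long $\varepsilon_i\pm\varepsilon_j$, short $\varepsilon_i$; type $C_n$: long $2\varepsilon_i$, short $\varepsilon_i\pm\varepsilon_j$; types $A_n$, $D_n$ as usual). A Levi subalgebra is, for a subset $R'\subseteq R$ closed under addition (within $R$) and under $\alpha\mapsto-\alpha$, $\mathfrak a=\sum_{\alpha\in R'}[\mathfrak g_\alpha,\mathfrak g_{-\alpha}]\oplus\bigoplus_{\alpha\in R'}\mathfrak g_\alpha$; it is semisimple, with Cartan subalgebra $\mathfrak h_{\mathfrak a}\subseteq\mathfrak h$ and positive roots $R'\cap R^+$. For a simple Levi subalgebra $\mathfrak b$ with fundamental weights $\tau_1,\dots,\tau_s$ let $\pi_{\mathfrak b}:\mathfrak h^*\to\mathfrak h_{\mathfrak b}^*$ be restriction. $(\mathfrak b,\omega_k)$ is globally admissible if $\pi_{\mathfrak b}(\omega_k)$ is $0$ or one of $\tau_1,\dots,\tau_s$. $(\mathfrak b,\omega_k)$ is locally non-admissible if either (1) $\mathfrak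 b$ is of type $B_s$, $s>1$, $\varepsilon_i$ is the unique short simple root of $\mathfrak b$, and $i\le k\le n-1$; or (2) $\mathfrak g$ is of type $C_n$, $\mathfrak b$ is of type $A_s$ and $\pi_{\mathfrak b}(\omega_k)\notin\{0,\tau_1,\dots,\tau_s\}$; otherwise locally admissible. For semisimple $\mathfrak a$ and $\lambda=\omega_{i_1}+\dots+\omega_{i_r}$ (with repetition), $(\mathfrak a,\lambda)$ is locally (resp. globally) admissible if $(\mathfrak a_l,\omega_{i_j})$ is locally (resp. globally) admissible for every $j$ and every simple ideal $\mathfrak a_l$ of $\mathfrak a$. *)

(* Defs.v *)
From HB Require Import structures.
From mathcomp Require Import all_boot all_order all_algebra.
Set Implicit Arguments. Unset Strict Implicit. Unset Printing Implicit Defensive.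
Import Order.TTheory GRing.Theory Num.Theory.
Local Open Scope ring_scope.

Inductive ctype := TA | TB | TC | TD.

Definition rank_ok (t : ctype) (n : nat) : bool :=
  match t with
  | TA => (1 <= n)%N | TB => (2 <= n)%N | TC => (3 <= n)%N | TD => (4 <= n)%N
  end.

(* ambient coordinate space: R^{n+1} for A_n, R^n otherwise;
   coordinate j : 'I_m stands for eps_{j+1} *)
Definition dimV (t : ctype) (n : nat) : nat := if t is TA then n.+1 else n.
Notation vec t n := 'rV[rat]_(dimV t n).

Definition eps {m : nat} (i : 'I_m) : 'rV[rat]_m := delta_mx 0 i.
Definition dot {m : nat} (u v : 'rV[rat]_m) : rat := \sum_(j < m) u 0 j * v 0 j.

Definition is_pos_root (t : ctype) (n : nat) (a : vec t n) : bool :=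
  match t with
  | TA => [exists i : 'I_(dimV t n), exists j : 'I_(dimV t n), (i < j)%N && (a == eps i - eps j)]
  | TB => [exists i : 'I_(dimV t n), exists j : 'I_(dimV t n), (i < j)%N && ((a == eps i - eps j) || (a == eps i + eps j))]
          || [exists i : 'I_(dimV t n), a == eps i]
  | TC => [exists i : 'I_(dimV t n), exists j : 'I_(dimV t n), (i < j)%N && ((a == eps i - eps j) || (a == eps i + eps j))]
          || [exists i : 'I_(dimV t n), a == eps i *+ 2]
  | TD => [exists i : 'I_(dimV t n), exists j : 'I_(dimV t n), (i < j)%N && ((a == eps i - eps j) || (a == eps i + eps j))]
  end.

Definition is_root (t : ctype) (n : nat) (a : vec t n) : bool :=
  is_pos_root a || is_pos_root (- a).

Definition fund_weight (t : ctype) (n k : nat) : vec t n :=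
  \row_(j < dimV t n)
   match t with
   | TA => (if (j < k)%N then 1 else 0) - k%:R / (n.+1)%:R
   | TB => if (k < n)%N then (if (j < k)%N then 1 else 0) else 1 / 2
   | TC => if (j < k)%N then 1 else 0
   | TD => if (k <= n - 2)%N then (if (j < k)%N then 1 else 0)
           else if k == (n - 1)%N then (if (j < n - 1)%N then 1 / 2 else - (1 / 2))
           else 1 / 2
   end.

(* R' : a set of roots closed under addition within R and under negation;
   it defines the (semisimple) Levi subalgebra a *)
Definition levi_set (t : ctype) (n : nat) (R' : pred (vec t n)) : Prop :=
  [/\ forall a, R' a -> is_root a,
      forall a b, R' a -> R' b -> is_root (a + b) -> R' (a + b)
    & forall a, R' a -> R' (- a)].

Definition nonorth {m : nat} : rel 'rV[rat]_m := fun a b => dot a b != 0.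

(* the irreducible component of R' containing a0 (roots of a simple ideal of a):
   b is linked to a0 by a chain of pairwise non-orthogonal roots of R' *)
Definition comp (t : ctype) (n : nat) (R' : pred (vec t n)) (a0 b : vec t n) : Prop :=
  R' b /\ exists s : seq (vec t n), [/\ all R' s, path nonorth a0 s & last a0 s = b].

Definition simple_root (t : ctype) (n : nat) (C : vec t n -> Prop) (b : vec t n) : Prop :=
  [/\ C b, is_pos_root b &
      ~ (exists g d, [/\ C g, C d, is_pos_root g, is_pos_root d & b = g + d])].

Definition pair_co {m : nat} (l b : 'rV[rat]_m) : rat := 2 * dot l b / dot b b.

(* pi_b(l) is 0 or one of the fundamental weights tau_1..tau_s of b
   (pi_b(l) is determined by its values on the simple coroots of b) *)
Definition zero_or_fund (t : ctype) (n : nat) (C : vec t n -> Prop) (l : vec t n) : Prop :=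
  (forall b, simple_root C b -> pair_co l b = 0) \/
  (exists b0, [/\ simple_root C b0, pair_co l b0 = 1 &
                  forall b, simple_root C b -> b <> b0 -> pair_co l b = 0]).

Definition enum_simple (t : ctype) (n : nat) (C : vec t n -> Prop) (bs : seq (vec t n)) : Prop :=
  uniq bs /\ forall b, simple_root C b <-> b \in bs.

(* Gram matrix of the simple system is (a positive multiple of) that of A_s / B_s
   (for B_s the last simple root is the short one) *)
Definition gram_A {m : nat} (bs : seq 'rV[rat]_m) : Prop :=
  exists c : rat, 0 < c /\ forall i j : nat, (i < size bs)%N -> (j < size bs)%N ->
    dot (nth 0 bs i) (nth 0 bs j) =
      if i == j then 2 * c else if (i.+1 == j) || (j.+1 == i) then - c else 0.

Definition gram_B {m : nat} (bs : seq 'rV[rat]_m) : Prop :=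
  exists c : rat, 0 < c /\ forall i j : nat, (i < size bs)%N -> (j < size bs)%N ->
    dot (nth 0 bs i) (nth 0 bs j) =
      if i == j then (if i == (size bs).-1 then c else 2 * c)
      else if (i.+1 == j) || (j.+1 == i) then - c else 0.

Definition of_type_A (t : ctype) (n : nat) (C : vec t n -> Prop) (s : nat) : Prop :=
  exists bs, [/\ size bs = s, enum_simple C bs & gram_A bs].

Definition of_type_B_with (t : ctype) (n : nat) (C : vec t n -> Prop) (s : nat)
  (bs : seq (vec t n)) : Prop :=
  [/\ size bs = s, enum_simple C bs & gram_B bs].

Definition glob_adm1 (t : ctype) (n : nat) (C : vec t n -> Prop) (k : nat) : Prop :=
  zero_or_fund C (fund_weight t n k).

Definition loc_nonadm1 (t : ctype) (n : nat) (C : vec t n -> Prop) (k : nat) : Prop :=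
  (exists s bs, [/\ (1 < s)%N, of_type_B_with C s bs &
      exists i : 'I_(dimV t n), last 0 bs = eps i /\ (i.+1 <= k <= n - 1)%N])
  \/
  (t = TC /\ (exists s, (0 < s)%N /\ of_type_A C s) /\ ~ zero_or_fund C (fund_weight t n k)).

Definition loc_adm1 (t : ctype) (n : nat) (C : vec t n -> Prop) (k : nat) : Prop :=
  ~ loc_nonadm1 C k.

(* lambda = omega_{k_1} + ... + omega_{k_r}, given by the list ks;
   simple ideals of a  <->  components comp R' a0, a0 in R' *)
Definition glob_adm (t : ctype) (n : nat) (R' : pred (vec t n)) (ks : seq nat) : Prop :=
  forall a0, R' a0 -> forall k, k \in ks -> glob_adm1 (comp R' a0) k.

Definition loc_adm (t : ctype) (n : nat) (R' : pred (vec t n)) (ks : seq nat) : Prop :=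
  forall a0, R' a0 -> forall k, k \in ks -> loc_adm1 (comp R' a0) k.

(* Main.v *)
Require Import Defs.
From mathcomp Require Import all_boot all_order all_algebra.
From mathcomp Require Import ring lra zify.
Import Order.TTheory GRing.Theory Num.Theory.
Local Open Scope ring_scope.

Lemma eps_entry m (i j : 'I_m) : (eps i) 0 j = (j == i)%:R :> rat.
Proof. by rewrite /eps mxE eqxx. Qed.

Lemma dot_eps m (u : 'rV[rat]_m) (i : 'I_m) : dot u (eps i) = u 0 i.
Proof.
rewrite /dot (bigD1 i) //= eps_entry eqxx mulr1 big1 ?addr0 // => j ji.
by rewrite eps_entry (negbTE ji) mulr0.
Qed.

Lemma pair_co_eps m (u : 'rV[rat]_m) (i : 'I_m) : pair_co u (eps i) = 2 * u 0 i.
Proof. by rewrite /pair_co !dot_eps eps_entry eqxx divr1. Qed.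

Lemma natr01 (b : bool) : (b%:R : rat) = 0 \/ (b%:R : rat) = 1.
Proof. by case: b; [right|left]. Qed.

Theorem mainTheorem3 (t : ctype) (n : nat) (R' : pred (vec t n)) (ks : seq nat) :
  rank_ok t n ->
  levi_set R' ->
  all (fun k => (0 < k <= n)%N) ks ->
  glob_adm R' ks -> loc_adm R' ks.
Proof.
move=> Hr Hlevi Hks Hg a0 Ha0 k Hk
  [[s [bs [Hs [Hsz [Huniq Hsim] Hgram] [i [Hlast Hik]]]]] | [Ht [_ Hnz]]]; last first.
  by apply: Hnz; exact: Hg a0 Ha0 k Hk.
have Hin : eps i \in bs.
  rewrite -Hlast; case: bs Hsz {Hsim Huniq Hgram Hlast} => [|b bs'] Hsz.
    by rewrite -Hsz in Hs.
  by rewrite /= mem_last.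
have Hsr := (Hsim (eps i)).2 Hin.
have Hpc : pair_co (fund_weight t n k) (eps i) = 0 \/ pair_co (fund_weight t n k) (eps i) = 1.
  case: (Hg a0 Ha0 k Hk) => [H0|[b0 [Hb0 H1 Hb]]]; first by left; apply: H0.
  have [->|ne] := eqVneq (eps i) b0; first by right.
  by left; apply: Hb => // E; rewrite E eqxx in ne.
case: Hsr => _ Hpos _.
rewrite pair_co_eps /fund_weight mxE in Hpc.
move/andP: Hik => [Hik1 Hik2].
clear -Hpc Hpos Hik1 Hik2.
case: t i Hpc Hpos Hik1 Hik2 => i Hpc Hpos Hik1 Hik2.
- move: Hpos => /existsP [i' /existsP [j /andP [Hij /eqP E]]].
  have := congr1 (fun M : 'rV[rat]_(dimV TA n) => M 0 j) E.
  rewrite /= !mxE !eqxx /=.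
  case: (eqVneq j i') => [E'|_]; first by rewrite E' ltnn in Hij.
  case: (natr01 (j == i)) => ->; rewrite /= ?mulr0n ?mulr1n; lra.
- have H0: (k < n)%N by lia. rewrite H0 in Hpc.
  have H_: (i < k)%N by lia. rewrite H_ in Hpc.
  case: Hpc; lra.
- have H0: (i < k)%N by lia. rewrite H0 in Hpc.
  case: Hpc; lra.
- move: Hpos => /existsP [i' /existsP [j /andP [Hij /orP [] /eqP E]]].
  + have := congr1 (fun M : 'rV[rat]_(dimV TD n) => M 0 j) E.
    rewrite /= !mxE !eqxx /=.
    case: (eqVneq j i') => [E'|_]; first by rewrite E' ltnn in Hij.
    case: (natr01 (j == i)) => ->; rewrite /= ?mulr0n ?mulr1n; lra.
  + have := congr1 (fun M : 'rV[rat]_(dimV TD n) => M 0 j) E.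
    have := congr1 (fun M : 'rV[rat]_(dimV TD n) => M 0 i') E.
    rewrite /= !mxE !eqxx /=.
    case: (eqVneq j i') => [E'|_]; first by rewrite E' ltnn in Hij.
    case: (eqVneq i' j) => [E'|_]; first by rewrite E' ltnn in Hij.
    case: (eqVneq i' i) => [Ei|ne1]; case: (eqVneq j i) => [Ej|ne2]; rewrite /= ?mulr0n ?mulr1n; try lra.
    by move: Hij; rewrite Ei Ej ltnn.
Qed.
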